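(* Let $\mathscr D:\mathscr N=\mathscr N_1\cup\cdots\cup\mathscr N_k$ be a $\mathscr C_{\mathscr D}$-decomposition of a chemical reaction network $\mathscr N$ with $\mathscr C_{\mathscr D}=\{y_1,y_2\}$ and $\ell>2$, where $\ell$ is the number of linkage classes of $\mathscr N$. If there is at most one path in $\mathscr N$ that connects $y_1$ and $y_2$, then $\mathscr D$ is incidence independent.
   Context: A CRN $\mathscr N=(\mathscr S,\mathscr C,\mathscr R)$ is viewed as a directed graph on its complexes with arcs its reactions; paths are paths in the underlying undirected graph and linkage classes are its connected components. A decomposition $\mathscr N=\mathscr N_1\cup\cdots\cup\mathscr N_k$ ($k\ge 2$) is given by a partition $\{\mathscr R_1,\dots,\mathscr R_k\}$ of the reaction set; the subnetwork $\mathscr N_i$ has reactions $\mathscr R_i$ and complex set $\mathscr C_i$ consisting of complexes occurring in reactions of $\mathscr R_i$. The set $\mathscr C_{\mathscr D}$ of common complexes consists of the complexes lying in the complex sets of at least two distinct subnetworks. A $\mathscr C_{\mathscr D}$-decomposition is one with $\mathscr C_i\cap\mathscr C_j=\mathscr C_{\mathscr D}$ for all $i\ne j$. With $n,\ell$ the numbers of complexes and linkage classes of $\mathscr N$ and $n_i,\ell_i$ those of $\mathscr N_i$, the decomposition is incidence independent if the image of the incidence map of $\mathscr N$ (the linear map $\mathbb R^{\mathscr R}\to\mathbb R^{\mathscr C}$ sending a reaction $y\to y'$ to $\omega_{y'}-\omega_y$) is the direct sum of the images of the incidence maps of the $\mathscr N_i$, equivalently $n-\ell=\sum_i(n_i-\ell_i)$.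 *)

(* Defs.v *)
From mathcomp Require Import all_boot all_order all_algebra.
From mathcomp Require Import reals.
Set Implicit Arguments. Unset Strict Implicit. Unset Printing Implicit Defensive.
Import GRing.Theory.
Local Open Scope ring_scope.

(* A chemical reaction network viewed as a directed (multi)graph on its
   complexes: complexes form the finite type [C], reactions the finite type
   [Rx], each reaction r is the arc  src r -> tgt r.  Species play no role in
   the notions below (incidence map, linkage classes, paths). *)
Section CRN.
Variables (C Rx : finType) (src tgt : Rx -> C).

Definition is_CRN : Prop :=
  [/\ forall r, src r != tgt r,
      injective (fun r => (src r, tgt r)) &
      forall y : C, exists r, (src r == y) || (tgt r == y)].

Definition adj (P : pred Rx) : rel C := fun x y =>
  [exists r, P r && (((src r == x) && (tgt r == y)) || ((src r == y) && (tgt r == x)))].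

Definition n_linkage : nat := n_comp (adj predT) predT.

(* decomposition given by part : Rx -> 'I_k (block i is R_i = part^-1(i)) *)
Variables (k : nat) (part : Rx -> 'I_k).

Definition cplx (i : 'I_k) : {set C} :=
  [set y | [exists r, (part r == i) && ((src r == y) || (tgt r == y))]].

Definition n_sub (i : 'I_k) : nat := #|cplx i|.
Definition l_sub (i : 'I_k) : nat :=
  n_comp (adj (fun r => part r == i)) (mem (cplx i)).

Definition common : {set C} :=
  [set y | [exists i, exists j, (i != j) && (y \in cplx i) && (y \in cplx j)]].

Definition is_decomposition : Prop :=
  (2 <= k)%N /\ forall i : 'I_k, exists r, part r == i.

Definition is_CD_decomposition : Prop :=
  forall i j : 'I_k, i != j -> cplx i :&: cplx j = common.

(* incidence map: reaction r |-> omega_{tgt r} - omega_{src r}, as a row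
   vector in F^C (coordinates indexed through enum_val). *)
Variable F : fieldType.
Definition inc_row (r : Rx) : 'rV[F]_#|C| :=
  \row_j (((enum_val j == tgt r)%:R - (enum_val j == src r)%:R) : F).

Definition img (P : pred Rx) : 'M[F]_#|C| := (\sum_(r | P r) <<inc_row r>>)%MS.

(* Directness is stated by the rank equality (this is what MathComp's
   [mxdirect] unfolds to; [mxdirect] itself is avoided because its syntactic
   inference would look through [img_sub] into the inner sums). *)
Definition img_sub (i : 'I_k) : 'M[F]_#|C| := img (fun r => part r == i).

Definition incidence_independent : Prop :=
  (img predT == \sum_(i < k) img_sub i)%MS /\
  \rank (\sum_(i < k) img_sub i)%MS = (\sum_(i < k) \rank (img_sub i))%N.

End CRN.

(* Paths in the underlying undirected multigraph: a path is a sequence of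
   reactions (edges) traversed in either direction; [walk_verts x p] gives the
   visited vertices starting at x (None if p is not a walk from x). *)
Section Paths.
Variables (C Rx : finType) (src tgt : Rx -> C).

Fixpoint walk_verts (x : C) (p : seq Rx) : option (seq C) :=
  match p with
  | [::] => Some [:: x]
  | r :: p' =>
      if src r == x then omap (cons x) (walk_verts (tgt r) p')
      else if tgt r == x then omap (cons x) (walk_verts (src r) p')
      else None
  end.

Definition is_path (x y : C) (p : seq Rx) : bool :=
  if walk_verts x p is Some vs then uniq vs && (last x vs == y) else false.

End Paths.

(* Main.v *)
Require Import Defs.
From mathcomp Require Import all_boot all_order all_algebra.
From mathcomp Require Import reals.
Import GRing.Theory.
Local Open Scope ring_scope.
Set Implicit Arguments. Unset Strict Implicit.

Lemma direct_rank (F : fieldType) (k n : nat) (A_ : 'I_k -> 'M[F]_n) :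
  (forall i, (A_ i :&: \sum_(j | true && (j != i)) A_ j)%MS = 0) ->
  \rank (\sum_(i < k) A_ i)%MS = (\sum_(i < k) \rank (A_ i))%N.
Proof. move=> H. have : mxdirect (\sum_(i < k) A_ i) by apply/mxdirect_sumsP => i _; apply: H.
 rewrite mxdirectE /=. by move/eqP. Qed.

Section Aux.
Variables (C Rx : finType) (src tgt : Rx -> C) (F : fieldType).
Local Open Scope ring_scope.
Set Implicit Arguments. Unset Strict Implicit.

Definition ev (v : 'rV[F]_#|C|) (x : C) : F := v 0 (enum_rank x).
Definition colf (f : C -> F) : 'cV[F]_#|C| := \col_j f (enum_val j).

Lemma mul_colf v f : (v *m colf f) 0 0 = \sum_(x : C) ev v x * f x.
Proof.
rewrite mxE (reindex (@enum_val C predT)); last by apply: onW_bij; apply: enum_val_bij.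
apply: eq_bigr => j _; by rewrite /ev enum_valK mxE.
Qed.

Lemma sum_delta (a : C) (g : C -> F) : \sum_(x : C) (x == a)%:R * g x = g a.
Proof.
rewrite (bigD1 a) //= eqxx mul1r big1 ?addr0 // => x /negbTE ->; by rewrite mul0r.
Qed.

Lemma ev_inc r x : ev (inc_row src tgt F r) x = (x == tgt r)%:R - (x == src r)%:R.
Proof. by rewrite /ev mxE enum_rankK. Qed.

Lemma img_func (P : pred Rx) (f : C -> F) :
  (forall r, P r -> f (tgt r) = f (src r)) ->
  forall v, (v <= img src tgt F P)%MS -> \sum_(x : C) ev v x * f x = 0.
Proof.
move=> Hf v Hv.
have Hk : (img src tgt F P <= kermx (colf f))%MS.
  apply/sumsmx_subP => r Pr; rewrite genmxE; apply/sub_kermxP.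
  apply/matrixP => i j; rewrite !ord1 [RHS]mxE mul_colf.
  under eq_bigr => x _ do rewrite ev_inc mulrBl.
  by rewrite sumrB !sum_delta Hf // subrr.
have /sub_kermxP Hz := submx_trans Hv Hk.
by rewrite -mul_colf Hz mxE.
Qed.

Lemma adj_sym P : symmetric (adj src tgt P).
Proof.
move=> x y; apply/existsP/existsP => -[r Hr]; exists r; move: Hr;
  by case: (P r) => //=; rewrite orbC.
Qed.

Lemma sum_two (v : 'rV[F]_#|C|) a b (g : C -> F) : a != b ->
  (forall z, z != a -> z != b -> ev v z = 0) ->
  \sum_(x : C) ev v x * g x = ev v a * g a + ev v b * g b.
Proof.
move=> ab H.
rewrite (bigD1 a) //= (bigD1 b) /=; last by rewrite eq_sym.
rewrite big1 ?addr0 // => z /andP[za zb]; by rewrite H ?mul0r.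
Qed.

Lemma walk_of (P : pred Rx) s x : path (adj src tgt P) x s ->
  exists p, walk_verts src tgt x p = Some (x :: s) /\ all P p.
Proof.
elim: s x => [|z s IH] x /=; first by exists [::].
case/andP => /existsP[r /andP[Pr Hr]] /IH[p [Hp Ap]].
exists (r :: p); split; last by rewrite /= Pr.
rewrite /=; case/orP: Hr => /andP[/eqP sr /eqP tr].
  by rewrite sr eqxx tr Hp.
case: eqP => [sx|_]; last by rewrite tr eqxx sr Hp.
by rewrite tr -sx sr Hp.
Qed.

Lemma path_of (P : pred Rx) x y : connect (adj src tgt P) x y -> x != y ->
  exists r p, is_path src tgt x y (r :: p) /\ P r.
Proof.
case/connectP => s hs ->.
case: (shortenP hs) => s' hs' uq _ neq.
have [p [Hp Ap]] := walk_of hs'.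
case: p Hp Ap => [|r p] Hp Ap.
  by move: Hp neq => /= [<-] /=; rewrite eqxx.
exists r, p; split; last by case/andP: Ap.
by rewrite /is_path Hp uq /=.
Qed.

End Aux.

Theorem proposition7 (R : realType) (C Rx : finType) (src tgt : Rx -> C)
    (k : nat) (part : Rx -> 'I_k) (y1 y2 : C) :
  is_CRN src tgt ->
  is_decomposition part ->
  is_CD_decomposition src tgt part ->
  common src tgt part = [set y1; y2] ->
  y1 != y2 ->
  (2 < n_linkage src tgt)%N ->
  (forall p q : seq Rx, is_path src tgt y1 y2 p -> is_path src tgt y1 y2 q -> p = q) ->
  incidence_independent src tgt part R.
Proof.
move=> _ _ HCD Hcom Hne _ Huniq.
set A := img_sub src tgt part R.
set con := fun m : 'I_k => connect (adj src tgt (fun r => part r == m)).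
have Hconn : forall i j, i != j -> con i y1 y2 -> con j y1 y2 -> False.
  move=> i j ij ci cj.
  have [r [p [Hp Pr]]] := path_of ci Hne.
  have [r' [p' [Hp' Pr']]] := path_of cj Hne.
  have [er _] : r = r' /\ p = p' by case: (Huniq _ _ Hp Hp').
  by move: ij; rewrite -(eqP Pr) -(eqP Pr') er eqxx.
have Hsupp : forall m x v, (v <= A m)%MS -> x \notin cplx src tgt part m -> ev v x = 0.
  move=> m x v Hv xm.
  have := img_func (f := fun z => (z == x)%:R) _ Hv.
  rewrite (eq_bigr (fun z => (z == x)%:R * ev v z)); last by move=> z _; rewrite mulrC.
  rewrite sum_delta => -> // r Pr.
  have Hin : forall y, (src r == y) || (tgt r == y) -> y \in cplx src tgt part m.
    by move=> y Hy; rewrite inE; apply/existsP; exists r; rewrite Pr.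
  case: (tgt r =P x) => [tx|_]; first by move: xm; rewrite -tx Hin // eqxx orbT.
  case: (src r =P x) => [sx|_] //; by move: xm; rewrite -sx Hin // eqxx.
have Hcls : forall m y v, (v <= A m)%MS ->
    \sum_(x : C) ev v x * (con m y x)%:R = 0.
  move=> m y v Hv; apply: img_func Hv => r Pr.
  have e : adj src tgt (fun r => part r == m) (src r) (tgt r).
    by apply/existsP; exists r; rewrite Pr !eqxx.
  suff -> : con m y (tgt r) = con m y (src r) by [].
  apply/idP/idP => H.
    apply: connect_trans H _; apply: connect1; by rewrite adj_sym.
  exact: connect_trans H (connect1 e).
have indep : forall u : 'I_k -> 'rV[R]_#|C|, (forall m, (u m <= A m)%MS) ->
    \sum_m u m = 0 -> forall m, u m = 0.
  move=> u Hu Hs.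
  have S1 : forall m x, x != y1 -> x != y2 -> ev (u m) x = 0.
    move=> m x x1 x2.
    case: (boolP (x \in cplx src tgt part m)) => xm; last exact: Hsupp (Hu m) xm.
    have : ev (\sum_m' u m') x = 0 by rewrite Hs /ev mxE.
    rewrite /ev summxE (bigD1 m) //= big1 ?addr0 // => m' m'm.
    apply: Hsupp (Hu m') _; apply/negP => xm'.
    have : x \in cplx src tgt part m :&: cplx src tgt part m' by rewrite inE xm.
    have mm' : m != m' by rewrite eq_sym.
    by rewrite (HCD _ _ mm') Hcom !inE (negbTE x1) (negbTE x2).
  have S3 : forall m, ~~ con m y1 y2 -> u m = 0.
    move=> m nc.
    have sy : connect_sym (adj src tgt (fun r => part r == m)) by apply: sym_connect_sym; apply: adj_sym.
    have h1 := Hcls m y1 _ (Hu m); have h2 := Hcls m y2 _ (Hu m).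
    rewrite (sum_two _ Hne (S1 m)) in h1; rewrite (sum_two _ Hne (S1 m)) in h2.
    have c11 : con m y1 y1 by exact: connect0.
    have c22 : con m y2 y2 by exact: connect0.
    have c21 : con m y2 y1 = con m y1 y2 by exact: sy.
    rewrite c11 (negbTE nc) mulr0 addr0 mulr1 in h1.
    rewrite c22 c21 (negbTE nc) mulr0 add0r mulr1 in h2.
    apply/rowP => j; rewrite [RHS]mxE.
    have := enum_valK j => <-.
    case: (enum_val j =P y1) => [->|/eqP n1] //.
    case: (enum_val j =P y2) => [->|/eqP n2] //.
    exact: S1.
  move=> m; case: (boolP (con m y1 y2)) => c; last exact: S3.
  move: Hs; rewrite (bigD1 m) //= big1 ?addr0 // => m' m'm.
  apply: S3; apply/negP => c'; exact: Hconn _ _ m'm c' c.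
split.
  rewrite /A /img_sub /img (partition_big part predT) //.
  set X := (X in (X == _)%MS).
  have -> : X = (\sum_(i < k) \sum_(r | part r == i) (<<inc_row src tgt R r>>)%MS)%MS.
    by apply: eq_bigr => i _; apply: eq_bigl.
  by apply/andP; split; apply: submx_refl.
apply: direct_rank => i; apply/eqP/rowV0P => v.
rewrite sub_capmx => /andP[vi /sub_sumsmxP [w Hw]].
pose u m := if m == i then - v else w m *m A m.
have Hu : forall m, (u m <= A m)%MS.
  move=> m; rewrite /u; case: eqP => [->|_]; last exact: submxMl.
  by rewrite eqmx_opp.
have Hs : \sum_m u m = 0.
  rewrite (bigD1 i) //= /u eqxx.
  rewrite (eq_bigr (fun j => w j *m A j)); last by move=> j /negbTE jn; rewrite jn.
  by rewrite {1}Hw addNr.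
by have := indep u Hu Hs i; rewrite /u eqxx => /eqP; rewrite oppr_eq0 => /eqP.
Qed.
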